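(* Let $m$ be a universal probability and let $M$ be a universal semi-POVM. Then there exist $c_1>0$ and $c_2>0$ such that for every density matrix $\rho\in\mathrm{Her}(N)$ and every $s\in\Sigma^*$, $$c_1\,m(s)\le\operatorname{tr}(\rho M(s))\le c_2\,m(s).$$
   Context: $N$ is a fixed positive integer; $\Sigma^*$ is the set of finite binary strings. $\mathrm{Her}(N)$ is the set of $N\times N$ Hermitian matrices and $\mathrm{Her}_Q(N)$ those with entries in $\{a+ib:a,b\in\mathbb{Q}\}$; $A\leqslant B$ means $B-A$ is positive semi-definite. A density matrix is $\rho\in\mathrm{Her}(N)$, $0\leqslant\rho$, $\operatorname{tr}\rho=1$. A lower-computable semi-measure is a function $r:\Sigma^*\to[0,\infty)$ with $\sum_s r(s)\le 1$ such that there is a total recursive $f:\mathbb{N}\times\Sigma^*\to\mathbb{Q}$ with $\lim_{n}f(n,s)=r(s)$ and $f(n,s)\le f(n+1,s)$ for all $n,s$. A universal probability is a lower-computable semi-measure $m$ such that for every lower-computable semi-measure $r$ there is $c>0$ with $c\,r(s)\le m(s)$ for all $s$. A semi-POVM on $\Sigma^*$ is a map $R:\Sigma^*\to\mathrm{Her}(N)$ with $0\leqslant R(s)$ for all $s$ and $\sum_s R(s)\leqslant I$. A lower-computable semi-POVM is a semi-POVM $R$ for which there is a total recursive $f:\mathbb{N}\times\Sigma^*\to\mathrm{Her}_Q(N)$ with $\lim_{n}f(n,s)=R(s)$ and $f(n,s)\leqslant R(s)$ for all $n,s$. A universal semi-POVM is a lower-computable semi-POVM $M$ such that for every lower-computable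 semi-POVM $R$ there is $c>0$ with $c\,R(s)\leqslant M(s)$ for all $s\in\Sigma^*$. *)

(* Defs.v *)
From HB Require Import structures.
From mathcomp Require Import all_boot all_order all_algebra.
From mathcomp Require Import reals.
From mathcomp Require Import complex.

Set Implicit Arguments.
Unset Strict Implicit.
Unset Printing Implicit Defensive.

Import Order.TTheory GRing.Theory Num.Theory.
Local Open Scope ring_scope.

Inductive recf : Type :=
| RZero : recf
| RSucc : recf
| RProj : nat -> recf
| RComp : recf -> list recf -> recf
| RPrim : recf -> recf -> recf
| RMu : recf -> recf.

(* [ev p v y]: program [p] on argument list [v] halts with output [y].
   Extra arguments are ignored (this does not change the class of
   computable functions). *)
Inductive ev : recf -> seq nat -> nat -> Prop :=
| ev_zero v : ev RZero v 0
| ev_succ x v : ev RSucc (x :: v) x.+1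
| ev_proj i v : (i < size v)%N -> ev (RProj i) v (nth 0%N v i)
| ev_comp f gs v ws y : evl gs v ws -> ev f ws y -> ev (RComp f gs) v y
| ev_prim0 f g v y : ev f v y -> ev (RPrim f g) (0%N :: v) y
| ev_primS f g n v z y :
    ev (RPrim f g) (n :: v) z -> ev g (n :: z :: v) y ->
    ev (RPrim f g) (n.+1 :: v) y
| ev_mu f v n :
    ev f (n :: v) 0 ->
    (forall m, (m < n)%N -> exists k, ev f (m :: v) k.+1) ->
    ev (RMu f) v n
with evl : list recf -> seq nat -> seq nat -> Prop :=
| evl_nil v : evl nil v [::]
| evl_cons g gs v y ys : ev g v y -> evl gs v ys -> evl (g :: gs) v (y :: ys).

Definition total_recursive (g : nat -> nat) : Prop :=
  exists p : recf, forall x, ev p [:: x] (g x).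

Definition computable (A B : countType) (f : A -> B) : Prop :=
  exists g : nat -> nat, total_recursive g /\ forall a, g (pickle a) = pickle (f a).

Definition computable2 (B : countType) (f : nat -> seq bool -> B) : Prop :=
  computable (fun p : nat * seq bool => f p.1 p.2).

Section Defs.
Variable R : realType.

(* sum_s r(s) <= 1, for a nonnegative family: every finite subsum <= 1 *)
Definition semi_measure (r : seq bool -> R) : Prop :=
  (forall s, 0 <= r s) /\
  (forall S : seq (seq bool), uniq S -> \sum_(s <- S) r s <= 1).

Definition lower_computable_semi_measure (r : seq bool -> R) : Prop :=
  semi_measure r /\
  exists f : nat -> seq bool -> rat,
    computable2 f /\
    (forall n s, f n s <= f n.+1 s) /\
    (forall s (e : R), 0 < e -> exists n0, forall n, (n0 <= n)%N ->
        `|ratr (f n s) - r s| < e).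

Definition universal_probability (m : seq bool -> R) : Prop :=
  lower_computable_semi_measure m /\
  forall r, lower_computable_semi_measure r ->
    exists c : R, 0 < c /\ forall s, c * r s <= m s.

Local Open Scope complex_scope.

Definition adjmx (k l : nat) (A : 'M[R[i]]_(k, l)) : 'M[R[i]]_(l, k) :=
  (map_mx Num.conj A)^T.

Definition hermitian (N : nat) (A : 'M[R[i]]_N) : Prop := adjmx A = A.

Definition psd (N : nat) (A : 'M[R[i]]_N) : Prop :=
  hermitian A /\ forall v : 'cV[R[i]]_N, 0 <= (adjmx v *m A *m v) 0 0.

Definition loewner (N : nat) (A B : 'M[R[i]]_N) : Prop := psd (B - A).

Definition density_matrix (N : nat) (rho : 'M[R[i]]_N) : Prop :=
  hermitian rho /\ psd rho /\ \tr rho = 1.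

(* Her_Q(N): entries a + ib with a b rational, coded as pairs (a, b) *)
Definition Qmx (N : nat) (F : 'M[rat * rat]_N) : 'M[R[i]]_N :=
  \matrix_(i, j) ((ratr (F i j).1) +i* (ratr (F i j).2)).

(* sum_s R(s) <= I : every finite partial sum is <= I *)
Definition semi_POVM (N : nat) (Rm : seq bool -> 'M[R[i]]_N) : Prop :=
  (forall s, psd (Rm s)) /\
  (forall S : seq (seq bool), uniq S -> loewner (\sum_(s <- S) Rm s) 1%:M).

Definition lower_computable_semi_POVM (N : nat) (Rm : seq bool -> 'M[R[i]]_N)
  : Prop :=
  semi_POVM Rm /\
  exists f : nat -> seq bool -> 'M[rat * rat]_N,
    computable2 f /\
    (forall n s, hermitian (Qmx (f n s))) /\
    (forall s (e : R), 0 < e -> exists n0, forall n, (n0 <= n)%N ->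
        forall i j, `|Qmx (f n s) i j - Rm s i j| < e%:C) /\
    (forall n s, loewner (Qmx (f n s)) (Rm s)).

Definition universal_semi_POVM (N : nat) (M : seq bool -> 'M[R[i]]_N) : Prop :=
  lower_computable_semi_POVM M /\
  forall Rm : seq bool -> 'M[R[i]]_N, lower_computable_semi_POVM Rm ->
    exists c : R, 0 < c /\ forall s, loewner (c%:C *: Rm s) (M s).

End Defs.

(* Main.v *)
Require Import Defs.
From HB Require Import structures.
From mathcomp Require Import all_boot all_order all_algebra.
Set Implicit Arguments.
Unset Strict Implicit.
Unset Printing Implicit Defensive.

Definition PR (k : nat) (F : seq nat -> nat) : Prop :=
  exists p, forall v, size v = k -> ev p v (F v).

Lemma PR_ext k F G : PR k F -> (forall v, size v = k -> F v = G v) -> PR k G.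
Proof. by case=> p Hp H; exists p => v Hv; rewrite -H //; apply: Hp. Qed.

Lemma PR_zero k : PR k (fun _ => 0).
Proof. by exists RZero => v _; constructor. Qed.

Lemma PR_proj k i : i < k -> PR k (fun v => nth 0 v i).
Proof. by move=> ik; exists (RProj i) => v Hv; constructor; rewrite Hv. Qed.

Lemma PR_succ : PR 1 (fun v => (nth 0 v 0).+1).
Proof.
exists RSucc => [[|x [|y w]]] //= _; constructor.
Qed.

Fixpoint allPR k (Fs : seq (seq nat -> nat)) : Prop :=
  if Fs is F :: Fs' then PR k F /\ allPR k Fs' else True.

Lemma PR_comp k G Fs : PR (size Fs) G -> allPR k Fs ->
  PR k (fun v => G (map (fun F => F v) Fs)).
Proof.
case=> pg Hg HF.
have [ps Hps] : exists ps, forall v, size v = k -> evl ps v (map (fun F => F v) Fs).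
  elim: Fs HF {Hg} => [|F Fs IH] /= => [_|[[p Hp] /IH [ps Hps]]].
    by exists nil => v _; constructor.
  by exists (p :: ps) => v Hv; constructor; [apply: Hp | apply: Hps].
exists (RComp pg ps) => v Hv; econstructor; first exact: Hps.
by apply: Hg; rewrite size_map.
Qed.

Fixpoint primf (F0 G : seq nat -> nat) (n : nat) (w : seq nat) : nat :=
  if n is n'.+1 then G (n' :: primf F0 G n' w :: w) else F0 w.

Lemma PR_prim k F0 G : PR k F0 -> PR k.+2 G ->
  PR k.+1 (fun v => primf F0 G (head 0 v) (behead v)).
Proof.
case=> p0 H0 [pg Hg]; exists (RPrim p0 pg) => [[|n w]] //= [Hw].
elim: n => [|n IH] /=; first by constructor; apply: H0.
by econstructor; [exact: IH | apply: Hg; rewrite /= Hw].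
Qed.

Lemma PR_mu k F : PR k.+1 F -> (forall v, size v = k -> exists n, F (n :: v) = 0) ->
  exists G, PR k G /\ forall v, size v = k ->
    F (G v :: v) = 0 /\ forall j, j < G v -> F (j :: v) <> 0.
Proof.
case=> p Hp Hex.
pose P v := fun n => (F (n :: v) == 0) || (size v != k).
have exP v : exists n, P v n.
  case: (boolP (size v == k)) => [/eqP /Hex [n Hn]|Hs].
    by exists n; rewrite /P Hn eqxx.
  by exists 0; rewrite /P Hs orbT.
exists (fun v => ex_minn (exP v)); split; last first.
  move=> v Hv; case: ex_minnP => n; rewrite /P Hv eqxx orbF => /eqP Hn Hmin.
  split => // j jn Hj; have := Hmin j; rewrite Hj eqxx => /(_ isT).
  by rewrite leqNgt jn.
exists (RMu p) => v Hv; case: ex_minnP => n; rewrite /P Hv eqxx orbF => /eqP Hn Hmin.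
constructor; first by rewrite -Hn; apply: Hp; rewrite /= Hv.
move=> j jn; case E: (F (j :: v)) => [|y].
  by have := Hmin j; rewrite E eqxx => /(_ isT); rewrite leqNgt jn.
by exists y; rewrite -E; apply: Hp; rewrite /= Hv.
Qed.

Lemma PR_op1 k f F : PR 1 (fun v => f (nth 0 v 0)) -> PR k F -> PR k (fun v => f (F v)).
Proof.
move=> Hf HF; apply: PR_ext (PR_comp (Fs := [:: F]) Hf _) _ => //.
Qed.

Lemma PR_op2 k f F1 F2 : PR 2 (fun v => f (nth 0 v 0) (nth 0 v 1)) ->
  PR k F1 -> PR k F2 -> PR k (fun v => f (F1 v) (F2 v)).
Proof.
move=> Hf H1 H2; apply: PR_ext (PR_comp (Fs := [:: F1; F2]) Hf _) _ => //.
Qed.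

Lemma PR_S k F : PR k F -> PR k (fun v => (F v).+1).
Proof. exact: PR_op1 PR_succ. Qed.

Lemma PR_const k c : PR k (fun _ => c).
Proof. elim: c => [|c IH]; [exact: PR_zero | exact: PR_S]. Qed.

Lemma PR_add_base : PR 2 (fun v => nth 0 v 0 + nth 0 v 1).
Proof.
have := PR_prim (PR_proj (k := 1) (i := 0) isT) (PR_S (PR_proj (k := 3) (i := 1) isT)).
move=> H; apply: PR_ext H _ => [[|x [|y [|z w]]]] //= _.
by elim: x => //= x ->.
Qed.

Lemma PR_add k F1 F2 : PR k F1 -> PR k F2 -> PR k (fun v => F1 v + F2 v).
Proof. exact: PR_op2 PR_add_base. Qed.

Lemma PR_mul_base : PR 2 (fun v => nth 0 v 0 * nth 0 v 1).
Proof.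
have := PR_prim (PR_zero 1) (PR_add (PR_proj (k := 3) (i := 1) isT) (PR_proj (k := 3) (i := 2) isT)).
move=> H; apply: PR_ext H _ => [[|x [|y [|z w]]]] //= _.
by elim: x => //= x ->; rewrite mulSn addnC.
Qed.

Lemma PR_mul k F1 F2 : PR k F1 -> PR k F2 -> PR k (fun v => F1 v * F2 v).
Proof. exact: PR_op2 PR_mul_base. Qed.

Lemma PR_pow2_base : PR 1 (fun v => 2 ^ nth 0 v 0).
Proof.
have := PR_prim (PR_const 0 1) (PR_add (PR_proj (k := 2) (i := 1) isT) (PR_proj (k := 2) (i := 1) isT)).
move=> H; apply: PR_ext H _ => [[|x [|y w]]] //= _.
by elim: x => //= x ->; rewrite expnS mul2n addnn.
Qed.

Lemma PR_pow2 k F : PR k F -> PR k (fun v => 2 ^ F v).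
Proof. exact: PR_op1 PR_pow2_base. Qed.

Lemma PR_pred_base : PR 1 (fun v => (nth 0 v 0).-1).
Proof.
have := PR_prim (PR_zero 0) (PR_proj (k := 2) (i := 0) isT).
move=> H; apply: PR_ext H _ => [[|x [|y w]]] //= _.
by case: x.
Qed.

Lemma PR_subr_base : PR 2 (fun v => nth 0 v 1 - nth 0 v 0).
Proof.
have := PR_prim (PR_proj (k := 1) (i := 0) isT) (PR_op1 PR_pred_base (PR_proj (k := 3) (i := 1) isT)).
move=> H; apply: PR_ext H _ => [[|x [|y [|z w]]]] //= _.
by elim: x => //= [|x ->]; rewrite ?subn0 // subnS.
Qed.

Lemma PR_sub k F1 F2 : PR k F1 -> PR k F2 -> PR k (fun v => F1 v - F2 v).
Proof.
move=> H1 H2; apply: (PR_op2 (f := fun a b => b - a)) H2 H1.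
exact: PR_subr_base.
Qed.

Lemma PR_leq k F1 F2 : PR k F1 -> PR k F2 -> PR k (fun v => nat_of_bool (F1 v <= F2 v)).
Proof.
move=> H1 H2; apply: PR_ext (PR_sub (PR_const k 1) (PR_sub H1 H2)) _ => v _.
by case: leqP => [/eqP ->|] //; rewrite -subn_gt0; case: (F1 v - F2 v) => [|[|]].
Qed.

Lemma PR_eq k F1 F2 : PR k F1 -> PR k F2 -> PR k (fun v => nat_of_bool (F1 v == F2 v)).
Proof.
move=> H1 H2; apply: PR_ext (PR_mul (PR_leq H1 H2) (PR_leq H2 H1)) _ => v _.
by rewrite eqn_leq; case: (_ <= _); case: (_ <= _).
Qed.

Lemma PR_and k (b1 b2 : seq nat -> bool) : PR k (fun v => nat_of_bool (b1 v)) ->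
  PR k (fun v => nat_of_bool (b2 v)) -> PR k (fun v => nat_of_bool (b1 v && b2 v)).
Proof.
move=> H1 H2; apply: PR_ext (PR_mul H1 H2) _ => v _.
by case: (b1 v); case: (b2 v).
Qed.

Lemma PR_or k (b1 b2 : seq nat -> bool) : PR k (fun v => nat_of_bool (b1 v)) ->
  PR k (fun v => nat_of_bool (b2 v)) -> PR k (fun v => nat_of_bool (b1 v || b2 v)).
Proof.
move=> H1 H2; apply: PR_ext (PR_leq (PR_const k 1) (PR_add H1 H2)) _ => v _.
by case: (b1 v); case: (b2 v).
Qed.

Lemma PR_not k (b : seq nat -> bool) : PR k (fun v => nat_of_bool (b v)) ->
  PR k (fun v => nat_of_bool (~~ b v)).
Proof.
move=> H; apply: PR_ext (PR_sub (PR_const k 1) H) _ => v _.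
by case: (b v).
Qed.

Lemma PR_if k (b : seq nat -> bool) F1 F2 : PR k (fun v => nat_of_bool (b v)) ->
  PR k F1 -> PR k F2 -> PR k (fun v => if b v then F1 v else F2 v).
Proof.
move=> H H1 H2.
apply: PR_ext (PR_add (PR_mul H H1) (PR_mul (PR_not H) H2)) _ => v _.
by case: (b v) => /=; rewrite ?mul1n ?mul0n ?addn0.
Qed.

From HB Require Import structures.
From mathcomp Require Import all_boot all_order all_algebra.
Set Implicit Arguments.
Unset Strict Implicit.
Unset Printing Implicit Defensive.

Lemma allPR_shift k d : allPR (k + d) [seq (fun v => nth 0 v (i + d)) | i <- iota 0 k].
Proof.
suff H : forall j, j <= k -> allPR (k + d) [seq (fun v => nth 0 v (i + d)) | i <- iota (k - j) j].
  by have := H k (leqnn k); rewrite subnn.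
elim=> [|j IH] // jk /=; split.
  by apply: PR_proj; rewrite ltn_add2r ltn_subrL /= (leq_trans _ jk).
have := IH (ltnW jk); rewrite subnS prednK // subn_gt0 //.
Qed.

Lemma map_shift d w pre : size pre = d ->
  map (fun F => F (pre ++ w)) [seq (fun v => nth 0 v (i + d)) | i <- iota 0 (size w)] = w.
Proof.
move=> Hp; rewrite -map_comp /comp.
rewrite -[in RHS](mkseq_nth 0 w) /mkseq; apply: eq_map => i.
by rewrite nth_cat Hp ltnNge leq_addl /= addnK.
Qed.

Lemma allPR_cat k A B : allPR k A -> allPR k B -> allPR k (A ++ B).
Proof. by elim: A => //= F A IH [? ?] ?; split => //; apply: IH. Qed.

Lemma PR_bex k (P : seq nat -> bool) : PR k.+1 (fun v => nat_of_bool (P v)) ->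
  PR k.+1 (fun v => nat_of_bool (has (fun j => P (j :: behead v)) (iota 0 (head 0 v).+1))).
Proof.
move=> HP.
pose Fs0 := (fun _ : seq nat => 0) :: [seq (fun v => nth 0 v (i + 0)) | i <- iota 0 k].
have H0 : PR k (fun w => nat_of_bool (P (map (fun F => F w) Fs0))).
  apply: (PR_comp (G := fun u => nat_of_bool (P u)) (Fs := Fs0)); first by rewrite /= size_map size_iota.
  by split; [exact: PR_zero | have := allPR_shift k 0; rewrite addn0].
pose Fs1 := (fun v : seq nat => (nth 0 v 0).+1) :: [seq (fun v => nth 0 v (i + 2)) | i <- iota 0 k].
have H1 : PR k.+2 (fun w => nat_of_bool ((0 < nth 0 w 1) || P (map (fun F => F w) Fs1))).
  apply: PR_or; first exact: PR_leq (PR_const _ 1) (PR_proj _).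
  apply: (PR_comp (G := fun u => nat_of_bool (P u)) (Fs := Fs1)); first by rewrite /= size_map size_iota.
  split; first exact: PR_S (PR_proj _).
  by have := allPR_shift k 2; rewrite addn2.
apply: PR_ext (PR_prim H0 H1) _ => [[|n w]] //= [Hw].
rewrite /Fs0 /Fs1 -Hw.
elim: n => [|n IH].
  by rewrite [primf _ _ 0 _]/= (map_shift w (pre := [::])) //= orbF.
have E : iota 0 n.+2 = iota 0 n.+1 ++ [:: n.+1] by rewrite -addn1 iotaD.
rewrite [primf _ _ n.+1 _]/= IH (map_shift w (pre := [:: n; _])) //.
have E1 := iotaD 1 n 1; rewrite addn1 add1n in E1.
rewrite E1 has_cat /= orbF orbA.
by rewrite lt0b.
Qed.

Lemma code_uniq a r a' r' : 2 ^ a * r.*2.+1 = 2 ^ a' * r'.*2.+1 -> a = a' /\ r = r'.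
Proof.
elim: a a' => [|a IH] [|a'] /=.
- by rewrite !mul1n => [[/double_inj]].
- move/(congr1 odd); rewrite mul1n /= odd_double expnS -mulnA oddM /=.
  by [].
- move/(congr1 odd); rewrite mul1n /= odd_double expnS -mulnA oddM /=.
  by [].
- rewrite !expnS -!mulnA => /eqP; rewrite eqn_pmul2l // => /eqP /IH [-> ->] //.
Qed.

Lemma code_cons x s : CodeSeq.code (x :: s) = 2 ^ x * (CodeSeq.code s).*2.+1.
Proof. by []. Qed.

Lemma code_bound x r : x <= 2 ^ x * r.*2.+1 /\ r <= 2 ^ x * r.*2.+1.
Proof.
split.
  apply: leq_trans (ltnW (ltn_expl x (isT : 1 < 2))) _.
  by rewrite leq_pmulr.
apply: leq_trans (_ : r.*2.+1 <= _); first by rewrite -addnn leqW // leq_addr.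
by rewrite leq_pmull // expn_gt0.
Qed.

Lemma PR_double k F : PR k F -> PR k (fun v => (F v).*2).
Proof. by move=> H; apply: PR_ext (PR_add H H) _ => v _; rewrite addnn. Qed.

Lemma PR_dec_core (enc : nat -> nat -> nat) :
  PR 2 (fun v => enc (nth 0 v 0) (nth 0 v 1)) ->
  (forall j t j' t', enc j t = enc j' t' -> j = j') ->
  (forall j t, j <= enc j t /\ t <= enc j t) ->
  exists f, PR 1 (fun v => f (nth 0 v 0)) /\ (forall j t, f (enc j t) = j) /\ (forall y, f y <= y).
Proof.
move=> Henc Hinj Hb.
pose P := fun v : seq nat => enc (nth 0 v 1) (nth 0 v 0) == nth 0 v 2.
have HP : PR 3 (fun v => nat_of_bool (P v)).
  apply: (@PR_eq _ (fun v => enc (nth 0 v 1) (nth 0 v 0)) (fun v => nth 0 v 2)) (PR_proj _) => //.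
  apply: (@PR_op2 _ enc (fun v => nth 0 v 1) (fun v => nth 0 v 0)) => //;
  exact: PR_proj.
have HE := PR_bex HP.
pose T := fun v : seq nat => has (fun j => P (j :: behead [:: nth 0 v 1; nth 0 v 0; nth 0 v 1]))
   (iota 0 (nth 0 v 1).+1) || (nth 0 v 0 == nth 0 v 1).
have HT : PR 2 (fun v => nat_of_bool (~~ T v)).
  apply: PR_not; apply: PR_or; last exact: PR_eq (PR_proj _) (PR_proj _).
  have := PR_comp (k := 2) (Fs := [:: (fun v => nth 0 v 1); (fun v => nth 0 v 0); (fun v => nth 0 v 1)]) HE.
  by move=> H; apply: H; rewrite /=; do !split; exact: PR_proj.
have Hex : forall v, size v = 1 -> exists n, nat_of_bool (~~ T (n :: v)) = 0.
  by move=> v _; exists (nth 0 v 0); rewrite /T /= eqxx orbT.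
have [G [HG HGs]] := PR_mu HT Hex.
exists (fun y => G [:: y]); split.
  by apply: PR_ext HG _ => [[|y [|]]].
split; last first.
  move=> y; have [_ Hmin] := HGs [:: y] erefl; rewrite leqNgt; apply/negP => Hy.
  by have := Hmin y Hy; rewrite /T /= eqxx orbT.
move=> j t; have [H0 Hmin] := HGs [:: enc j t] erefl.
  have HT0 : T [:: G [:: enc j t]; enc j t] by move: H0; case: (T _).
  case/orP: HT0 => [/hasP [u _]|/eqP /= HGe].
    by rewrite /P /= => /eqP Hj; have := Hinj _ _ _ _ Hj.
  have [Hbj Hbt] := Hb j t.
  case: (ltngtP (G [:: enc j t]) j) => // [|Hlt].
    by rewrite HGe ltnNge Hbj.
  have HTt : T [:: j; enc j t].
    apply/orP; left; apply/hasP; exists t; first by rewrite mem_iota add0n ltnS.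
    by rewrite /P /= eqxx.
  by have := Hmin j Hlt; rewrite HTt.
Qed.

Lemma PR_enc : PR 2 (fun v => 2 ^ nth 0 v 0 * (nth 0 v 1).*2.+1).
Proof.
apply: (@PR_mul _ (fun v => 2 ^ nth 0 v 0)); first exact: PR_pow2 (PR_proj _).
exact: PR_S (PR_double (PR_proj _)).
Qed.

Definition hdc y := head 0 (CodeSeq.decode y).
Definition tlc y := CodeSeq.code (behead (CodeSeq.decode y)).

Lemma hdc_code x s : hdc (CodeSeq.code (x :: s)) = x.
Proof. by rewrite /hdc CodeSeq.codeK. Qed.
Lemma tlc_code x s : tlc (CodeSeq.code (x :: s)) = CodeSeq.code s.
Proof. by rewrite /tlc CodeSeq.codeK. Qed.

Lemma dec_cases y : y = 0 \/ exists x r, y = 2 ^ x * r.*2.+1.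
Proof.
case: y => [|y]; [by left | right].
have E := CodeSeq.decodeK y.+1; move: E; case: (CodeSeq.decode y.+1) => [|x s] //= E.
by exists x, (CodeSeq.code s); rewrite -E.
Qed.

Lemma PR_hdc : PR 1 (fun v => hdc (nth 0 v 0)).
Proof.
have [f [Hf [Hfs Hfb]]] := PR_dec_core PR_enc (fun j t j' t' H => proj1 (code_uniq H)) code_bound.
apply: PR_ext Hf _ => v _; case: (dec_cases (nth 0 v 0)) => [->|[x [r ->]]].
  by have := Hfb 0; rewrite leqn0 => /eqP ->.
have E := hdc_code x (CodeSeq.decode r); rewrite code_cons CodeSeq.decodeK in E.
by rewrite Hfs E.
Qed.

Lemma PR_tlc : PR 1 (fun v => tlc (nth 0 v 0)).
Proof.
have H : PR 2 (fun v => 2 ^ nth 0 v 1 * (nth 0 v 0).*2.+1).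
  apply: (@PR_mul _ (fun v => 2 ^ nth 0 v 1)); first exact: PR_pow2 (PR_proj _).
  exact: PR_S (PR_double (PR_proj _)).
have Hi : forall j t j' t', (fun r x => 2 ^ x * r.*2.+1) j t = (fun r x => 2 ^ x * r.*2.+1) j' t' -> j = j'.
  by move=> j t j' t' /code_uniq [].
have Hb : forall j t, j <= (fun r x => 2 ^ x * r.*2.+1) j t /\ t <= (fun r x => 2 ^ x * r.*2.+1) j t.
  by move=> j t; have [] := code_bound t j.
have [f [Hf [Hfs Hfb]]] := PR_dec_core H Hi Hb.
apply: PR_ext Hf _ => v _; case: (dec_cases (nth 0 v 0)) => [->|[x [r ->]]].
  by have := Hfb 0; rewrite leqn0 => /eqP ->.
have E := tlc_code x (CodeSeq.decode r); rewrite code_cons CodeSeq.decodeK in E.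
by rewrite Hfs E.
Qed.

From HB Require Import structures.
From mathcomp Require Import all_boot all_order all_algebra.
Set Implicit Arguments.
Unset Strict Implicit.
Unset Printing Implicit Defensive.
Import GRing.Theory Num.Theory Order.TTheory.

Lemma pick_pair (A B : countType) (a : A) (b : B) :
  pickle (a, b) = CodeSeq.code [:: pickle a; pickle b].
Proof. reflexivity. Qed.
Lemma pick_int (n : nat) : pickle (Posz n) = CodeSeq.code [:: CodeSeq.code [:: n]; 0%N].
Proof. reflexivity. Qed.
Lemma pick_intN (n : nat) : pickle (Negz n) = CodeSeq.code [:: 0%N; CodeSeq.code [:: n]].
Proof. reflexivity. Qed.
Lemma pick_rat (q : rat) : pickle q = CodeSeq.code [:: pickle (numq q); pickle (denq q)].
Proof. reflexivity. Qed.
Lemma pick_mx (T : countType) m n (A : 'M[T]_(m,n)) : pickle A =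
  CodeSeq.code [seq CodeSeq.code [:: pickle ij; pickle (A ij.1 ij.2)] | ij <- enum {: (ordinal m * ordinal n)%type}].
Proof.
have -> : pickle A = CodeSeq.code (map pickle (val (tfgraph (mx_val A)))) by [].
rewrite /tfgraph /= /codom /image_mem -map_comp. apply: congr1; apply: eq_map => ij /=.
by case: A => f; rewrite /fun_of_matrix /=; case: ij.
Qed.

Lemma tr_PR g : total_recursive g <-> PR 1 (fun v => g (nth 0 v 0)).
Proof.
split=> [[p Hp]|[p Hp]].
  by exists p => [[|x [|]]] //= _; apply: Hp.
by exists p => x; apply: (Hp [:: x]).
Qed.

Lemma PR_code k Fs : allPR k Fs -> PR k (fun v => CodeSeq.code (map (fun F => F v) Fs)).
Proof.
elim: Fs => [|F Fs IH] /= => [_|[HF /IH H]]; first exact: PR_const.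
exact: PR_mul (PR_pow2 HF) (PR_S (PR_double H)).
Qed.

Lemma allPR_map (T : Type) k (F : T -> seq nat -> nat) s :
  (forall x, PR k (F x)) -> allPR k (map F s).
Proof. by move=> H; elim: s => //= x s IH; split. Qed.

Lemma PR_code2 k F1 F2 : PR k F1 -> PR k F2 -> PR k (fun v => CodeSeq.code [:: F1 v; F2 v]).
Proof.
move=> H1 H2; apply: PR_ext (PR_code (Fs := [:: F1; F2]) _) _ => //.
Qed.

Definition diagq (N : nat) (q : rat) : 'M[rat * rat]_N :=
  \matrix_(i, j) (if i == j then q else 0%R, 0%R).

Lemma comp_lower (N : nat) (fm : nat -> seq bool -> rat) :
  computable2 fm -> computable2 (fun n s => diagq N (fm n s)).
Proof.
case=> g [/tr_PR Hg Hgs].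
pose z := pickle (0 : rat).
pose h := fun x => CodeSeq.code [seq CodeSeq.code [:: pickle ij;
   if ij.1 == ij.2 then CodeSeq.code [:: x; z] else CodeSeq.code [:: z; z]]
   | ij <- enum {: ('I_N * 'I_N)%type}].
have Hh : PR 1 (fun v => h (nth 0 v 0)).
  apply: PR_ext (PR_code (Fs := [seq (fun v => CodeSeq.code [:: pickle ij;
   if ij.1 == ij.2 then CodeSeq.code [:: nth 0 v 0; z] else CodeSeq.code [:: z; z]])
   | ij <- enum {: ('I_N * 'I_N)%type}]) _) _.
    apply: allPR_map => ij; apply: PR_code2; first exact: PR_const.
    by case: (_ == _); apply: PR_code2; (exact: PR_const || exact: PR_proj).
  by move=> v _; rewrite /h -map_comp.
exists (fun x => h (g x)); split; first exact/tr_PR/(PR_op1 Hh Hg).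
move=> [n s]; rewrite Hgs (pick_mx (diagq _ _)) /h.
have E : forall q (ij : 'I_N * 'I_N), (if ij.1 == ij.2 then CodeSeq.code [:: pickle q; z] else CodeSeq.code [:: z; z]) = pickle (diagq N q ij.1 ij.2).
  by move=> q ij; rewrite /diagq mxE pick_pair /z; case: (ij.1 == ij.2).
by under eq_map => ij do rewrite E.
Qed.

From HB Require Import structures.
From mathcomp Require Import all_boot all_order all_algebra zify.
Set Implicit Arguments.
Unset Strict Implicit.
Unset Printing Implicit Defensive.
Import GRing.Theory Num.Theory Order.TTheory.

Definition PR1 f := PR 1 (fun v => f (nth 0 v 0)).

Lemma PR1_comp f g : PR1 f -> PR1 g -> PR1 (fun x => f (g x)).
Proof. by move=> Hf Hg; apply: PR_op1 Hf Hg. Qed.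

Lemma code1_neq0 n : CodeSeq.code [:: n] != 0.
Proof. by rewrite code_cons muln_eq0 negb_or expn_eq0. Qed.

Definition posp c := if hdc c == 0 then 0 else hdc (hdc c).
Definition negp c := if hdc c == 0 then (hdc (hdc (tlc c))).+1 else 0.

Lemma PR_posp : PR1 posp.
Proof.
rewrite /PR1 /posp.
apply: PR_if; first exact: PR_eq (PR_op1 PR_hdc (PR_proj _)) (PR_const _ 0).
  exact: PR_const.
exact: PR_op1 PR_hdc (PR_op1 PR_hdc (PR_proj _)).
Qed.

Lemma PR_negp : PR1 negp.
Proof.
rewrite /PR1 /negp.
apply: PR_if; first exact: PR_eq (PR_op1 PR_hdc (PR_proj _)) (PR_const _ 0).
  exact: PR_S (PR_op1 PR_hdc (PR_op1 PR_hdc (PR_op1 PR_tlc (PR_proj _)))).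
exact: PR_const.
Qed.

Lemma posneg (z : int) : z = ((posp (pickle z))%:Z - (negp (pickle z))%:Z)%R.
Proof.
case: z => n.
  by rewrite pick_int /posp /negp hdc_code (negbTE (code1_neq0 n)) hdc_code subr0.
rewrite pick_intN /posp /negp hdc_code eqxx tlc_code hdc_code hdc_code.
by rewrite NegzE sub0r.
Qed.

Lemma posp_pos (n : nat) : posp (pickle (Posz n)) = n /\ negp (pickle (Posz n)) = 0.
Proof.
by rewrite pick_int /posp /negp hdc_code (negbTE (code1_neq0 n)) hdc_code.
Qed.

Definition lerc c1 c2 :=
  (posp (hdc c1) * posp (hdc (tlc c2)) + negp (hdc c2) * posp (hdc (tlc c1)) <=
   posp (hdc c2) * posp (hdc (tlc c1)) + negp (hdc c1) * posp (hdc (tlc c2)))%N.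

Lemma lerc_pickle (q1 q2 : rat) : lerc (pickle q1) (pickle q2) = (q1 <= q2)%R.
Proof.
rewrite /lerc !pick_rat !hdc_code !tlc_code !hdc_code.
have -> : (q1 <= q2)%R = (numq q1 * denq q2 <= numq q2 * denq q1)%R by rewrite -le_ratE.
have [D1 ->] : exists D : nat, denq q1 = Posz D.
  by case: (denq q1) (denq_gt0 q1) => // D _; exists D.
have [D2 ->] : exists D : nat, denq q2 = Posz D.
  by case: (denq q2) (denq_gt0 q2) => // D _; exists D.
have [-> _] := posp_pos D1; have [-> _] := posp_pos D2.
set A1 := posp (pickle (numq q1)); set B1 := negp (pickle (numq q1)).
set A2 := posp (pickle (numq q2)); set B2 := negp (pickle (numq q2)).
have E1 := posneg (numq q1); have E2 := posneg (numq q2).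
rewrite -/A1 -/B1 in E1; rewrite -/A2 -/B2 in E2; rewrite E1 E2.
clearbody A1 B1 A2 B2.
apply/idP/idP => H; lia.
Qed.

Lemma PR_lerc : PR 2 (fun v => nat_of_bool (lerc (nth 0 v 0) (nth 0 v 1))).
Proof.
rewrite /lerc.
have P0 : PR 2 (fun v => nth 0 v 0) by exact: PR_proj.
have P1 : PR 2 (fun v => nth 0 v 1) by exact: PR_proj.
apply: PR_leq; apply: PR_add; apply: PR_mul;
  repeat first [ exact: PR_op1 PR_posp _ | exact: PR_op1 PR_negp _ | exact: PR_op1 PR_hdc _
               | exact: PR_op1 PR_tlc _ | exact: P0 | exact: P1 | apply: (PR_op1 PR_posp) | apply: (PR_op1 PR_negp) | apply: (PR_op1 PR_hdc) | apply: (PR_op1 PR_tlc)].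
Qed.

Definition maxc c1 c2 := if lerc c1 c2 then c2 else c1.

Lemma maxc_pickle (q1 q2 : rat) : maxc (pickle q1) (pickle q2) = pickle (Num.max q1 q2).
Proof. by rewrite /maxc lerc_pickle; case: lerP. Qed.

Lemma PR_maxc : PR 2 (fun v => maxc (nth 0 v 0) (nth 0 v 1)).
Proof. by apply: PR_if; [exact: PR_lerc | exact: PR_proj | exact: PR_proj]. Qed.

Fixpoint fmax (a : nat -> rat) (n : nat) : rat :=
  if n is n'.+1 then Num.max (fmax a n') (a n'.+1) else a 0.

Lemma iter_tlc p L : p <= size L -> iter p tlc (CodeSeq.code L) = CodeSeq.code (drop p L).
Proof.
elim: p => [|p IH] Hp; first by rewrite drop0.
rewrite iterS IH 1?ltnW // (drop_nth 0) // tlc_code //.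
Qed.

Lemma PR_iter p f : PR1 f -> PR1 (iter p f).
Proof.
move=> Hf; elim: p => [|p IH]; first exact: PR_proj.
by rewrite /PR1; apply: PR_ext (PR_op1 Hf IH) _ => v _; rewrite iterS.
Qed.

Lemma comp_upper N (fM : nat -> seq bool -> 'M[rat * rat]_N) (i : 'I_N) :
  computable2 fM -> computable2 (fun n s => fmax (fun k => (fM k s i i).1) n).
Proof.
case=> g [/tr_PR Hg Hgs].
pose p := index (i, i) (enum {: ('I_N * 'I_N)%type}).
pose ent y := hdc (hdc (tlc (hdc (iter p tlc y)))).
have Hent : PR1 ent.
  apply: PR1_comp PR_hdc _; apply: PR1_comp PR_hdc _; apply: PR1_comp PR_tlc _.
  exact: PR1_comp PR_hdc (PR_iter _ PR_tlc).
have entE : forall A : 'M[rat * rat]_N, ent (pickle A) = pickle (A i i).1.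
  move=> A; rewrite /ent pick_mx.
  have Hp : p < size (enum {: ('I_N * 'I_N)%type}) by rewrite index_mem mem_enum.
  rewrite iter_tlc; last by rewrite size_map ltnW.
  rewrite (drop_nth 0); last by rewrite size_map.
  rewrite hdc_code (nth_map (i, i)) // nth_index ?mem_enum // tlc_code hdc_code.
  by rewrite [A i i]surjective_pairing pick_pair hdc_code.
pose t k ps := ent (g (CodeSeq.code [:: k; ps])).
pose F0 := fun w : seq nat => t 0 (nth 0 w 0).
pose G := fun v : seq nat => maxc (nth 0 v 1) (t (nth 0 v 0).+1 (nth 0 v 2)).
have Ht : forall k s, t k (pickle s) = pickle (fM k s i i).1.
  move=> k s; rewrite /t (_ : CodeSeq.code [:: k; pickle s] = pickle (k, s)) //.
  by rewrite Hgs entE.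
have HF0 : PR 1 F0.
  apply: (@PR_op1 1 ent (fun w => g (CodeSeq.code [:: 0; nth 0 w 0]))) => //.
  apply: (@PR_op1 1 g (fun w => CodeSeq.code [:: 0; nth 0 w 0])) => //.
  exact: PR_code2 (PR_const _ 0) (PR_proj _).
have HG : PR 3 G.
  apply: (@PR_op2 3 maxc (fun v => nth 0 v 1) (fun v => t (nth 0 v 0).+1 (nth 0 v 2)));
    [exact: PR_maxc | exact: PR_proj | ].
  apply: (@PR_op1 3 ent (fun v => g (CodeSeq.code [:: (nth 0 v 0).+1; nth 0 v 2]))) => //.
  apply: (@PR_op1 3 g (fun v => CodeSeq.code [:: (nth 0 v 0).+1; nth 0 v 2])) => //.
  exact: PR_code2 (PR_S (PR_proj _)) (PR_proj _).
have HP := PR_prim HF0 HG.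
have HP1 := PR_comp (k := 1) (Fs := [:: (fun v => hdc (nth 0 v 0)); (fun v => hdc (tlc (nth 0 v 0)))]) HP.
exists (fun x => primf F0 G (hdc x) [:: hdc (tlc x)]); split.
  apply/tr_PR; apply: PR_ext (HP1 _) _ => //=; split; first exact: PR_hdc.
  by split => //; exact: PR_op1 PR_hdc PR_tlc.
move=> [n s] /=.
rewrite (_ : pickle (n, s) = CodeSeq.code [:: n; pickle s]) // hdc_code tlc_code hdc_code.
elim: n => [|n IH] /=; first by rewrite /F0 /= Ht.
by rewrite /G /= IH Ht maxc_pickle.
Qed.

From HB Require Import structures.
From mathcomp Require Import all_boot all_order all_algebra.
From mathcomp Require Import reals complex sesquilinear spectral.
Set Implicit Arguments.
Unset Strict Implicit.
Unset Printing Implicit Defensive.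
Import GRing.Theory Num.Theory Order.TTheory.
Local Open Scope ring_scope.
Local Open Scope complex_scope.

Section Mx.
Variable R : realType.
Local Notation C := R[i].

Lemma adjmxK n m (A : 'M[C]_(n, m)) : adjmx (adjmx A) = A.
Proof. by apply/matrixP => i j; rewrite !mxE conjCK. Qed.

Lemma adjmxM n m p (A : 'M[C]_(n, m)) (B : 'M[C]_(m, p)) : adjmx (A *m B) = adjmx B *m adjmx A.
Proof. by rewrite /adjmx map_mxM trmx_mul. Qed.

Lemma herm_hermsym n (A : 'M[C]_n) : Defs.hermitian A -> A \is hermsymmx.
Proof.
move=> H; apply/is_hermitianmxP; rewrite expr0 scale1r.
by rewrite -map_trmx; apply/esym.
Qed.

Lemma psd_form n (A : 'M[C]_n) (u : 'rV[C]_n) : psd A -> 0 <= (u *m A *m adjmx u) 0 0.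
Proof. by case=> _ /(_ (adjmx u)); rewrite adjmxK. Qed.

Lemma psd_entry n (A : 'M[C]_n) i : psd A -> 0 <= A i i.
Proof.
move=> H; have := psd_form (delta_mx 0 i) H.
have E : adjmx (delta_mx 0 i : 'rV[C]_n) = delta_mx i 0.
  by apply/matrixP => j k; rewrite !mxE rmorph_nat; case: (j == i); case: (k == 0).
by rewrite E -rowE -colE !mxE.
Qed.

Lemma entry_form n (X B : 'M[C]_n) i :
  (X *m B *m adjmx X) i i = (row i X *m B *m adjmx (row i X)) 0 0.
Proof.
have E : adjmx (delta_mx 0 i : 'rV[C]_n) = delta_mx i 0.
  by apply/matrixP => j k; rewrite !mxE rmorph_nat; case: (j == i); case: (k == 0).
rewrite rowE adjmxM E.
have -> : (delta_mx 0 i : 'rV[C]_n) *m X *m B *m (adjmx X *m (delta_mx i 0 : 'cV[C]_n)) =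
  (delta_mx 0 i : 'rV[C]_n) *m (X *m B *m adjmx X) *m (delta_mx i 0 : 'cV[C]_n) by rewrite !mulmxA.
by rewrite -rowE -colE !mxE.
Qed.

Lemma psd_conj_entry n (X B : 'M[C]_n) i : psd B -> 0 <= (X *m B *m adjmx X) i i.
Proof. by move=> HB; rewrite entry_form; apply: psd_form. Qed.

Lemma adjmx_tc n (P : 'M[C]_n) : adjmx P = map_mx Num.conj (P^T).
Proof. by rewrite /adjmx map_trmx. Qed.

Lemma tr_density n (rho B : 'M[C]_n) : density_matrix rho -> psd B ->
  0 <= \tr (rho *m B) /\ \tr (rho *m B) <= \tr B.
Proof.
move=> [Hh [Hpsd Htr]] HB.
have Hn : rho \is normalmx := hermitian_normalmx (herm_hermsym Hh).
have /orthomx_spectralP Erho := Hn.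
set P := spectralmx rho in Erho; set d := spectral_diag rho in Erho.
have PU : P \is unitarymx := spectral_unitarymx rho.
have Pu : P \in unitmx := spectral_unit rho.
have EPi : invmx P = adjmx P by rewrite adjmx_tc invmx_unitary.
have PPa : P *m adjmx P = 1%:M by rewrite -EPi mulmxV.
have PaP : adjmx P *m P = 1%:M by rewrite -EPi mulVmx.
have ED : diag_mx d = P *m rho *m adjmx P.
  by rewrite Erho EPi !mulmxA PPa mul1mx -mulmxA PPa mulmx1.
have Etr : \tr (rho *m B) = \sum_i d 0 i * (P *m B *m adjmx P) i i.
  rewrite Erho EPi -!mulmxA mxtrace_mulC -!mulmxA mxtrace_mulC !mulmxA.
  by rewrite mul_mx_diag /mxtrace; apply: eq_bigr => i _; rewrite mxE mulrC.
have Hd : forall i, 0 <= d 0 i.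
  by move=> i; have := psd_conj_entry P i Hpsd; rewrite -ED mxE eqxx mulr1n.
have Hb : forall i, 0 <= (P *m B *m adjmx P) i i by move=> i; exact: psd_conj_entry.
have Sd : \sum_i d 0 i = 1.
  rewrite -Htr.
  have -> : \tr rho = \tr (diag_mx d) by rewrite ED -mulmxA mxtrace_mulC -mulmxA PaP mulmx1.
  by rewrite /mxtrace; apply: eq_bigr => i _; rewrite mxE eqxx mulr1n.
have Sb : \sum_i (P *m B *m adjmx P) i i = \tr B.
  by rewrite -/(mxtrace _) -mulmxA mxtrace_mulC -mulmxA PaP mulmx1.
rewrite Etr; split; first by apply: sumr_ge0 => i _; apply: mulr_ge0.
rewrite -Sb; apply: ler_sum => i _; apply: ler_piMl => //.
by rewrite -Sd (bigD1 i) //= lerDl; apply: sumr_ge0.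
Qed.
End Mx.

From HB Require Import structures.
From mathcomp Require Import all_boot all_order all_algebra.
From mathcomp Require Import reals complex.
Set Implicit Arguments.
Unset Strict Implicit.
Unset Printing Implicit Defensive.
Import GRing.Theory Num.Theory Order.TTheory.
Local Open Scope ring_scope.
Local Open Scope complex_scope.

Section Main.
Variable R : realType.
Local Notation C := R[i].

Lemma ReD (x y : C) : complex.Re (x + y) = complex.Re x + complex.Re y.
Proof. by case: x; case: y. Qed.
Lemma ReN (x : C) : complex.Re (- x) = - complex.Re x.
Proof. by case: x. Qed.
Lemma ReB (x y : C) : complex.Re (x - y) = complex.Re x - complex.Re y.
Proof. by rewrite ReD ReN. Qed.
Lemma Re_sum (I : Type) (r : seq I) (P : pred I) (F : I -> C) :
  complex.Re (\sum_(i <- r | P i) F i) = \sum_(i <- r | P i) complex.Re (F i).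
Proof. exact: (big_morph _ ReD). Qed.

Lemma ge0_real (z : C) : 0 <= z -> z = (complex.Re z)%:C.
Proof. by move=> H; have := ger0_Im H; case: z {H} => a b /= ->. Qed.

Lemma ge0_Re (z : C) : 0 <= z -> 0 <= complex.Re z.
Proof. by move=> H; have := H; rewrite (ge0_real H) ler0c. Qed.

Lemma normC_real (x : R) : `|x%:C| = `|x|%:C.
Proof. by rewrite normc_def /=; congr (_%:C); rewrite [0 ^+ 2]expr2 mulr0 addr0 sqrtr_sqr. Qed.

Lemma norm_Re_lt (z : C) (e : R) : `|z| < e%:C -> `|complex.Re z| < e.
Proof.
rewrite normc_def ltcR => H; apply: le_lt_trans H.
by rewrite -sqrtr_sqr ler_sqrt ?lerDl ?sqr_ge0 // addr_ge0 ?sqr_ge0.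
Qed.

Lemma herm_scal n (a : R) : Defs.hermitian ((a%:C)%:M : 'M[C]_n).
Proof.
rewrite /Defs.hermitian /adjmx; apply/matrixP => i j; rewrite !mxE rmorphMn eq_sym.
by congr (_ *+ _); apply: conj_Creal; rewrite complex_real.
Qed.

Lemma psd_scal n (a : R) : 0 <= a -> psd ((a%:C)%:M : 'M[C]_n).
Proof.
move=> Ha; split; first exact: herm_scal.
move=> v; rewrite mul_mx_scalar -scalemxAl mxE; apply: mulr_ge0; first by rewrite ler0c.
rewrite mxE; apply: sumr_ge0 => k _; rewrite !mxE mulrC; exact: mul_conjC_ge0.
Qed.

Lemma mono_le (f : nat -> rat) (r : R) :
  (forall n, (f n <= f n.+1)%R) ->
  (forall e : R, 0 < e -> exists n0, forall n, (n0 <= n)%N -> `|ratr (f n) - r| < e) ->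
  forall n, ratr (f n) <= r.
Proof.
move=> Hmono Hconv n; rewrite leNgt; apply/negP => Hlt.
have Hpos : 0 < ratr (f n) - r by rewrite subr_gt0.
have [n0 Hn0] := Hconv _ Hpos.
have Hmn : forall k, (f n <= f (n + k)%N)%R.
  elim=> [|k IH]; first by rewrite addn0.
  by rewrite (le_trans IH) // addnS.
have H2 := Hmn n0; rewrite -(ler_rat R) in H2.
have Hx := Hn0 (n + n0)%N (leq_addl _ _).
have H3 : ratr (f n) - r <= ratr (f (n + n0)%N) - r by rewrite lerD2r.
rewrite ger0_norm in Hx; last by rewrite subr_ge0 (le_trans (ltW Hlt)).
by have := lt_le_trans Hx H3; rewrite ltxx.
Qed.

Lemma Qmx_diagq N (q : rat) : Qmx R (diagq N q) = ((ratr q : R)%:C)%:M.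
Proof.
apply/matrixP => i j; rewrite !mxE; case: (i == j) => /=.
  by rewrite rmorph0.
by rewrite !rmorph0.
Qed.

Lemma lower_part N (m : seq bool -> R) (M : seq bool -> 'M[C]_N) :
  universal_probability m -> universal_semi_POVM M ->
  exists c, 0 < c /\ forall s, psd (M s - ((c * m s)%:C)%:M).
Proof.
case=> [[[Hm0 Hm1] [fm [Hfc [Hfmono Hfconv]]]] _] [_ UM].
pose Rm s := ((m s)%:C)%:M : 'M[C]_N.
have ES : forall S, \sum_(s <- S) Rm s = ((\sum_(s <- S) m s)%:C)%:M.
  elim=> [|s S IH]; first by rewrite !big_nil rmorph0; apply/matrixP => i j; rewrite !mxE.
  by rewrite !big_cons IH rmorphD raddfD.
have HR : lower_computable_semi_POVM Rm.
  split.
    split; first by move=> s; exact: psd_scal (Hm0 s).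
    move=> S HS; rewrite /loewner ES -(rmorph1 (real_complex R)) -[1%:M]/((1 : C)%:M).
    rewrite -raddfB -rmorphB; apply: psd_scal; rewrite subr_ge0; exact: Hm1.
  exists (fun n s => diagq N (fm n s)); split; first exact: comp_lower.
  split; first by move=> n s; rewrite Qmx_diagq; exact: herm_scal.
  split.
    move=> s e He; have [n0 Hn0] := Hfconv s e He; exists n0 => n Hn i j.
    rewrite Qmx_diagq /Rm !mxE; case: (i == j) => /=.
      by rewrite !mulr1n -rmorphB normC_real ltcR; exact: Hn0.
    by rewrite !mulr0n subrr normr0 ltcR.
  move=> n s; rewrite /loewner Qmx_diagq /Rm -raddfB -rmorphB; apply: psd_scal.
  rewrite subr_ge0; apply: (@mono_le (fun k => fm k s)) => [k|]; [exact: Hfmono | exact: Hfconv].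
have [c [Hc HcM]] := UM Rm HR.
exists c; split => // s; have := HcM s; rewrite /loewner /Rm scale_scalar_mx -rmorphM.
by [].
Qed.

Lemma upper_part N (hN : (0 < N)%N) (m : seq bool -> R) (M : seq bool -> 'M[C]_N) :
  universal_probability m -> universal_semi_POVM M ->
  exists c2, 0 < c2 /\ forall s, \tr (M s) <= ((c2 * m s)%:C).
Proof.
case=> [_ Um] [[[HM0 HM1] [fM [Hfc [Hfh [Hfconv Hfle]]]]] _].
have Hi : forall i : 'I_N, exists c, 0 < c /\ forall s, c * complex.Re (M s i i) <= m s.
  move=> i; apply: Um; split.
    split; first by move=> s; apply: ge0_Re; exact: psd_entry.
    move=> S HS; have := psd_entry i (HM1 S HS); rewrite !mxE summxE eqxx mulr1n.
    by move/ge0_Re; rewrite ReB Re_sum subr_ge0.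
  pose a s k := (fM k s i i).1.
  exists (fun n s => fmax (a s) n); split; first exact: comp_upper.
  split; first by move=> n s /=; rewrite le_max lexx.
  move=> s e He.
  have Ha : forall k, ratr (a s k) <= complex.Re (M s i i).
    move=> k; have := psd_entry i (Hfle k s); rewrite mxE => /ge0_Re.
    by rewrite mxE ReD ReN /Qmx mxE /= subr_ge0.
  have Hfr : forall n, ratr (fmax (a s) n) <= complex.Re (M s i i).
    elim=> [|n IH] /=; first exact: Ha.
    by case: (lerP (fmax (a s) n) (a s n.+1)) => _; [exact: Ha | exact: IH].
  have Haf : forall n, (a s n <= fmax (a s) n)%R.
    by case=> [|n] /=; rewrite ?lexx // le_max lexx orbT.
  have [n0 Hn0] := Hfconv s e He; exists n0 => n Hn.
  have := Hn0 n Hn i i; rewrite mxE => /norm_Re_lt; rewrite ReB /=.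
  rewrite !ler0_norm ?subr_le0 ?Hfr ?Ha // => H; apply: le_lt_trans H.
  by rewrite lerN2 lerD2r ler_rat; exact: Haf.
have [c Hc] := fin_all_exists Hi.
exists (\sum_i (c i)^-1); split.
  rewrite (bigD1 (Ordinal hN)) //=; apply: (@lt_le_trans _ _ (c (Ordinal hN))^-1).
    by rewrite invr_gt0; case: (Hc (Ordinal hN)).
  by rewrite lerDl; apply: sumr_ge0 => j _; rewrite invr_ge0; case: (Hc j) => /ltW.
move=> s; rewrite /mxtrace (eq_bigr (fun i => (complex.Re (M s i i))%:C)); last first.
  by move=> i _; apply: ge0_real; apply: psd_entry.
rewrite -rmorph_sum lecR mulr_suml; apply: ler_sum => i _; have [Hci Hci'] := Hc i.
by rewrite ler_pdivlMl //; exact: Hci'.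
Qed.

Theorem main (N : nat) (hN : (0 < N)%N)
  (m : seq bool -> R) (M : seq bool -> 'M[R[i]]_N) :
  universal_probability m -> universal_semi_POVM M ->
  exists c1 c2 : R, 0 < c1 /\ 0 < c2 /\
    forall (rho : 'M[R[i]]_N) (s : seq bool), density_matrix rho ->
      (c1 * m s)%:C <= \tr (rho *m M s) /\ \tr (rho *m M s) <= (c2 * m s)%:C.
Proof.
move=> Hm HM.
have [c1 [Hc1 H1]] := lower_part Hm HM.
have [c2 [Hc2 H2]] := upper_part hN Hm HM.
have HM0 : forall s, psd (M s) by case: HM => [[[HM0 _] _] _].
exists c1, c2; split => //; split => // rho s Hrho; split.
  have [Hge _] := tr_density Hrho (H1 s).
  move: Hge; rewrite mulmxBr mul_mx_scalar linearB /= mxtraceZ.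
  by case: Hrho => [_ [_ ->]]; rewrite mulr1 subr_ge0.
have [_ Hle] := tr_density Hrho (HM0 s).
exact: le_trans Hle (H2 s).
Qed.
End Main.


Theorem mainTheorem8 (R : realType) (N : nat) (hN : (0 < N)%N)
  (m : seq bool -> R) (M : seq bool -> 'M[R[i]]_N) :
  universal_probability m -> universal_semi_POVM M ->
  exists c1 c2 : R, 0 < c1 /\ 0 < c2 /\
    forall (rho : 'M[R[i]]_N) (s : seq bool), density_matrix rho ->
      (c1 * m s)%:C <= \tr (rho *m M s) /\ \tr (rho *m M s) <= (c2 * m s)%:C.
Proof. exact: main. Qed.
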